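(* Let $\beta$ be a nonzero real number and let $T_\beta\colon\mathbb{R}[x]\to\mathbb{R}[x]$ be the linear operator defined by $T_\beta[x^n]=H_n(\tfrac{\beta}{2}x)$ for all $n\ge0$. Then $$T_\beta=\sum_{n=0}^{\infty}H_n\!\left(\tfrac{\beta-1}{2}x\right)\frac{D^n}{n!},$$ i.e. the coefficient polynomials of $T_\beta$ are $Q_n(x)=H_n(\tfrac{\beta-1}{2}x)$. In particular, the coefficient polynomials of the transformation $x^n\mapsto H_n(x)$ have real interlacing roots.
   Context: $H_n$ denotes the $n$th physicist Hermite polynomial, $H_n(x)=n!\sum_{m=0}^{\lfloor n/2\rfloor}\frac{(-1)^m}{m!(n-2m)!}(2x)^{n-2m}$. $D=d/dx$. Every linear operator $T\colon\mathbb{C}[x]\to\mathbb{C}[x]$ has a unique representation $T=\sum_{k=0}^\infty \frac{Q_k(x)}{k!}D^k$ with polynomials $Q_k(x)$ (the coefficient polynomials of $T$), where the sum acts finitely on each polynomial. *)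

(* Defs.v *)
From HB Require Import structures.
From mathcomp Require Import all_boot all_order all_algebra.
From mathcomp Require Export reals.
Set Implicit Arguments. Unset Strict Implicit. Unset Printing Implicit Defensive.
Import Order.TTheory GRing.Theory Num.Theory.
Local Open Scope ring_scope.

Definition hermite (R : fieldType) (n : nat) : {poly R} :=
  \sum_(m < n./2.+1)
     (((-1) ^+ m * (n`!)%:R / ((m`!)%:R * ((n - 2 * m)`!)%:R)) *: ('X *+ 2) ^+ (n - 2 * m)).

Definition hermite_scaled (R : fieldType) (c : R) (n : nat) : {poly R} :=
  hermite R n \Po (c *: 'X).

Definition Tbeta (R : fieldType) (beta : R) (p : {poly R}) : {poly R} :=
  \sum_(i < size p) p`_i *: hermite_scaled (beta / 2) i.

(* p and q have only real, simple roots, deg q = deg p + 1, and the roots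
   s_0 < ... < s_n of q and r_0 < ... < r_{n-1} of p strictly interlace:
   s_0 < r_0 < s_1 < r_1 < ... < r_{n-1} < s_n. *)
Definition real_interlacing (R : realDomainType) (p q : {poly R}) : Prop :=
  exists (r s : seq R),
    [/\ p != 0, q != 0, (size p).-1 = size r, (size q).-1 = size s
      & [/\ size s = (size r).+1, all (root p) r, all (root q) s
          & forall i, (i < size r)%N -> s`_i < r`_i < s`_i.+1]].

(* Main.v *)
Require Import Defs.
From HB Require Import structures.
From mathcomp Require Import all_boot all_order all_algebra.
From mathcomp Require Import reals.
From mathcomp Require Import zify ring lra.
From mathcomp Require Import polyrcf.
Import Order.TTheory GRing.Theory Num.Theory.
Local Open Scope ring_scope.

Section Herm.
Variable R : realType.

Definition hc (n k : nat) : R :=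
  if (k <= n)%N && ~~ odd (n - k) then
    (-1) ^+ ((n - k)./2) * (n`!)%:R / ((((n - k)./2)`!)%:R * (k`!)%:R) * 2 ^+ k
  else 0.

Lemma key_nat n k m : (m <= n./2)%N ->
  (k == n - 2 * m)%N = [&& (k <= n)%N, ~~ odd (n - k) & m == (n-k)./2].
Proof. move=> H. apply/idP/idP => [/eqP E | /and3P [a b c]]. apply/and3P; split; lia. apply/eqP; lia. Qed.

Lemma coef_hermite n k : (hermite R n)`_k = hc n k.
Proof.
rewrite /hermite coef_sum.
under eq_bigr => m _ do rewrite coefZ exprMn_n coefMn coefXn (key_nat _ _ _ (ltn_ord m)).
rewrite /hc; case: ifP => [/andP[kn ev]|H]; last first.
  by rewrite big1 // => m _; rewrite andbA H /= ?mul0rn ?mulr0n ?mulr0.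
have m0lt : ((n - k)./2 < n./2.+1)%N by lia.
rewrite (bigD1 (Ordinal m0lt)) //= big1 ?addr0; last first.
  move=> m /eqP Hm; rewrite kn ev /= (_ : (nat_of_ord m == (n-k)./2) = false) ?mul0rn ?mulr0 //.
  by apply/negbTE/eqP => E; apply: Hm; apply: val_inj.
rewrite kn ev eqxx /= mulr1n.
have -> : (n - 2 * (n - k)./2 = k)%N by lia.
by rewrite natrX.
Qed.


Lemma hc_eqE n k m : n = (k + 2 * m)%N ->
  hc n k = (-1) ^+ m * (n`!)%:R / ((m`!)%:R * (k`!)%:R) * 2 ^+ k.
Proof.
move=> E; rewrite /hc.
have -> : ((k <= n)%N && ~~ odd (n - k)) = true by apply/andP; split; lia.
by have -> : ((n - k)./2 = m)%N by lia.
Qed.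

Lemma hc_oddE n k m : n = (k + 2 * m).+1 -> hc n k = 0.
Proof.
move=> E; rewrite /hc.
by have -> : ((k <= n)%N && ~~ odd (n - k)) = false by apply/negbTE/negP => /andP[]; lia.
Qed.

Lemma hc_gtE n k : (n < k)%N -> hc n k = 0.
Proof.
move=> E; rewrite /hc.
by have -> : ((k <= n)%N && ~~ odd (n - k)) = false by apply/negbTE/negP => /andP[]; lia.
Qed.

Lemma nat_cases n k : (n < k)%N \/ (exists m, n = (k + 2 * m)%N) \/ (exists m, n = (k + 2 * m).+1).
Proof.
case: (ltnP n k) => H; first by left.
right; case: (boolP (odd (n - k))) => Ho.
  by right; exists ((n - k)./2); lia.
by left; exists ((n - k)./2); lia.
Qed.

Lemma size_hermite_le n : (size (hermite R n) <= n.+1)%N.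
Proof. by apply/leq_sizeP => j Hj; rewrite coef_hermite hc_gtE. Qed.

Lemma fact_neq0 n : (n`!)%:R != 0 :> R.
Proof. by rewrite pnatr_eq0 -lt0n fact_gt0. Qed.

Lemma binR n k : (k <= n)%N ->
  ('C(n, k))%:R = (n`!)%:R / ((k`!)%:R * ((n - k)`!)%:R) :> R.
Proof.
move=> H; rewrite -(bin_fact H) !natrM mulfK //.
by rewrite mulf_neq0 // fact_neq0.
Qed.

Lemma hermite_nderiv n i :
  (hermite R n)^`N(i) = (('C(n, i))%:R * 2 ^+ i) *: hermite R (n - i).
Proof.
apply/polyP => j; rewrite coef_nderivn coefZ !coef_hermite -[in LHS]mulr_natr.
case: (nat_cases n (i + j)) => [H|[[m E]|[m E]]].
- rewrite (hc_gtE _ _ H) mul0r; case: (leqP i n) => Hi.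
    by rewrite (hc_gtE (n - i) j) ?mulr0 //; lia.
  by rewrite bin_small // mul0r mul0r.
- rewrite (hc_eqE _ _ _ E) (hc_eqE (n - i) j m); last by lia.
  have Hi : (i <= n)%N by lia.
  have Hi2 : (i <= i + j)%N by lia.
  rewrite (binR _ _ Hi) (binR _ _ Hi2).
  have -> : (i + j - i = j)%N by lia.
  have F1 := fact_neq0 n; have F2 := fact_neq0 (n - i); have F3 := fact_neq0 i.
  have F4 := fact_neq0 j; have F5 := fact_neq0 m; have F6 := fact_neq0 (i + j).
  rewrite exprD; field.
  by rewrite F3 F4 F5 F6 F2.
- rewrite (hc_oddE _ _ _ E) (hc_oddE (n - i) j m) ?mul0r ?mulr0 //; lia.
Qed.

Lemma hermite_deriv n : (hermite R n.+1)^`() = (2 * (n.+1)%:R) *: hermite R n.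
Proof.
by rewrite -nderivn1 hermite_nderiv bin1 subn1 /= expr1 mulrC.
Qed.

Ltac fin E :=
  rewrite ?exprS ?factS ?fact0 ?natrM; rewrite E ?natrD ?natrM; field;
  rewrite ?andTb ?andbT -?natrD ?nat1r ?natr1 ?fact_neq0 ?pnatr_eq0 ?andbT //.

Lemma hermite_rec n :
  hermite R n.+1 = 2 *: ('X * hermite R n) - (hermite R n)^`().
Proof.
apply/polyP => k; rewrite coefB coefZ coefXM coef_deriv !coef_hermite -[X in _ - X]mulr_natr.
case: k => [|k] /=.
- case: (nat_cases n.+1 0) => [//|[[m E]|[m E]]].
  + case: m E => [|m] E; first by lia.
    rewrite (hc_eqE _ _ _ E) (hc_eqE n 1 m); last by lia.
    fin E.
  + rewrite (hc_oddE _ _ _ E); case: m E => [|m] E.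
      by rewrite (hc_gtE n 1) ?mul0r ?mul0rn ?mulr0 ?subrr //; lia.
    by rewrite (hc_oddE n 1 m) ?mul0r ?mul0rn ?mulr0 ?subrr //; lia.
- case: (nat_cases n.+1 k.+1) => [H|[[m E]|[m E]]].
  + rewrite (hc_gtE _ _ H) (hc_gtE n k) ?(hc_gtE n k.+2) ?mul0r ?mul0rn ?mulr0 ?subrr //; lia.
  + rewrite (hc_eqE _ _ _ E) (hc_eqE n k m); last by lia.
    case: m E => [|m] E.
      rewrite (hc_gtE n k.+2); last by lia.
      fin E.
    rewrite (hc_eqE n k.+2 m); last by lia.
    fin E.
  + rewrite (hc_oddE _ _ _ E) (hc_oddE n k m); last by lia.
    case: m E => [|m] E.
      by rewrite (hc_gtE n k.+2) ?mul0r ?mul0rn ?mulr0 ?subrr //; lia.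
    by rewrite (hc_oddE n k.+2 m) ?mul0r ?mul0rn ?mulr0 ?subrr //; lia.
Qed.

Lemma herm_add k (a b : R) :
  hermite R k \Po ((a + b) *: 'X) =
  \sum_(i < k.+1) (('C(k, i))%:R * (2 * b) ^+ i) *:
     ((hermite R (k - i) \Po (a *: 'X)) * 'X^i).
Proof.
rewrite {1}/comp_poly scalerDl.
rewrite (@nderiv_taylor_wide _ k.+1 _ (a *: 'X) (b *: 'X)); last first.
- by rewrite size_map_polyC size_hermite_le.
- exact: mulrC.
apply: eq_bigr => i _.
rewrite nderivn_map.
rewrite -/(comp_poly (a *: 'X) ((hermite R k)^`N(i))).
rewrite hermite_nderiv comp_polyZ exprZn exprMn.
rewrite -scalerAr -scalerAl scalerA; congr (_ *: _); ring.
Qed.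

Lemma sum_trunc (V : zmodType) m N (G : nat -> V) : (m <= N)%N ->
  (forall n, (m <= n)%N -> G n = 0) -> \sum_(n < N) G n = \sum_(n < m) G n.
Proof.
move=> H HG; rewrite (big_ord_widen N G H) [RHS]big_mkcond /=.
by apply: eq_bigr => i _; case: ltnP => // /HG ->.
Qed.

Lemma mono_formula (c : R) k :
  hermite_scaled (c + 2^-1) k =
  \sum_(n < k.+1) ('C(k, n))%:R *: (hermite_scaled c n * 'X^(k - n)).
Proof.
rewrite /hermite_scaled herm_add.
rewrite (reindex_inj rev_ord_inj) /=.
apply: eq_bigr => i _.
have Hi : (i <= k)%N by rewrite -ltnS.
rewrite subSS (subKn Hi) bin_sub // divff ?expr1n ?mulr1 //.
by rewrite pnatr_eq0.
Qed.

Lemma part1 (beta : R) (p : {poly R}) :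
  Tbeta beta p =
  \sum_(n < size p) ((n`!)%:R)^-1 *: (hermite_scaled ((beta - 1) / 2) n * p^`(n)).
Proof.
set c := (beta - 1) / 2.
have Eb : beta / 2 = c + 2^-1 by rewrite /c; field.
rewrite /Tbeta Eb.
have Hd : forall n, p^`(n) =
    \sum_(k < size p) (p`_k * (k ^_ n)%:R) *: 'X^(k - n).
  move=> n; rewrite -{1}[p]coefK poly_def linear_sum /=.
  by apply: eq_bigr => k _; rewrite derivnZ derivnXn -scaler_nat scalerA.
under eq_bigr => k _ do rewrite mono_formula.
under [RHS]eq_bigr => n _ do rewrite Hd mulr_sumr scaler_sumr.
rewrite exchange_big /=; apply: eq_bigr => k _.
rewrite (@sum_trunc _ k.+1 _ (fun i => i`!%:R^-1 *:
     (hermite_scaled c i * ((p`_k * (k ^_ i)%:R) *: 'X^(k - i))))); last first.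
- by move=> n Hn; rewrite ffact_small // mulr0 scale0r mulr0 scaler0.
- exact: ltn_ord.
rewrite scaler_sumr; apply: eq_bigr => n _.
rewrite -scalerAr !scalerA -bin_ffact natrM; congr (_ *: _).
by field; rewrite fact_neq0.
Qed.

Definition PP n := hermite_scaled ((2 - 1) / 2 : R) n.

Lemma half_eq : ((2 - 1) / 2 : R) = 2^-1.
Proof. by field. Qed.

Lemma hermite0 : hermite R 0 = 1.
Proof.
apply/polyP => k; rewrite coef_hermite coefC.
case: k => [|k]; last by rewrite hc_gtE.
by rewrite /hc /= !mul1r invr1 mulr1.
Qed.

Lemma PP0 : PP 0 = 1.
Proof. by rewrite /PP /hermite_scaled hermite0 comp_polyC. Qed.

Lemma PP1 : PP 1 = 'X.
Proof.
rewrite /PP /hermite_scaled hermite_rec hermite0 mulr1 derivC subr0.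
rewrite comp_polyZ comp_polyX scalerA half_eq divff ?scale1r //.
by rewrite pnatr_eq0.
Qed.

Lemma PPrec n : PP n.+2 = 'X * PP n.+1 - (2 * (n.+1)%:R) *: PP n.
Proof.
rewrite /PP /hermite_scaled hermite_rec hermite_deriv.
rewrite comp_polyB !comp_polyZ comp_polyM comp_polyX.
rewrite -scalerAl scalerA half_eq divff ?scale1r //.
by rewrite pnatr_eq0.
Qed.

Lemma chain_lt (f : nat -> R) N : (forall i, (i < N)%N -> f i < f i.+1) ->
  forall a b, (a < b)%N -> (b <= N)%N -> f a < f b.
Proof.
move=> H a; elim=> [//|b IH] Hab HbN.
have Hb : (b < N)%N by lia.
case: (ltngtP a b) => Hab'.
- exact: lt_trans (IH Hab' (ltnW Hb)) (H b Hb).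
- lia.
- by rewrite Hab'; apply: H.
Qed.

Lemma prod_sign (x : R) (t : seq R) (i : nat) : (i <= size t)%N ->
  (forall j, (j < i)%N -> t`_j < x) ->
  (forall j, (i <= j)%N -> (j < size t)%N -> x < t`_j) ->
  0 < (-1) ^+ (size t - i) * \prod_(z <- t) (x - z).
Proof.
elim: t i => [|a t IH] i Hi H1 H2.
  by rewrite big_nil /= sub0n expr0 mulr1 ltr01.
rewrite big_cons /=.
case: i Hi H1 H2 => [|i] Hi H1 H2.
  have ha : x < a by apply: (H2 0%N).
  have := IH 0%N (leq0n _) (fun j (h : (j < 0)%N) => False_ind _ (notF h))
    (fun j _ hj => H2 j.+1 isT hj).
  rewrite !subn0 exprS => h.
  have -> : -1 * (-1) ^+ size t * ((x - a) * \prod_(z <- t) (x - z)) =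
    ((-1) ^+ size t * \prod_(z <- t) (x - z)) * (a - x) by ring.
  by rewrite mulr_gt0 // subr_gt0.
have ha : a < x by apply: (H1 0%N).
have := IH i Hi (fun j hj => H1 j.+1 hj) (fun j h1 h2 => H2 j.+1 h1 h2).
rewrite subSS => h.
have -> : (-1) ^+ (size t - i) * ((x - a) * \prod_(z <- t) (x - z)) =
  ((-1) ^+ (size t - i) * \prod_(z <- t) (x - z)) * (x - a) by ring.
by rewrite mulr_gt0 // subr_gt0.
Qed.

Lemma sign_mul e (a b : R) : 0 < (-1) ^+ e * a -> 0 < (-1) ^+ e.+1 * b -> a * b < 0.
Proof.
rewrite exprS -signr_odd; case: (odd e); rewrite /= ?expr1 ?expr0 => h1 h2; nra.
Qed.

Lemma sgn_sq k : (-1) ^+ k * (-1) ^+ k = 1 :> R.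
Proof. by rewrite -exprD -signr_odd oddD addbb expr0. Qed.

Lemma build_seq (Q : nat -> R -> Prop) N :
  (forall i, (i < N)%N -> exists x, Q i x) ->
  exists s : seq R, size s = N /\ forall i, (i < N)%N -> Q i s`_i.
Proof.
elim: N => [|N IH] H; first by exists [::].
have [s [Hs HQ]] : exists s : seq R, size s = N /\ forall i, (i < N)%N -> Q i s`_i.
  by apply: IH => i Hi; apply: H; lia.
have [x Hx] := H N (ltnSn N).
exists (rcons s x); split; first by rewrite size_rcons Hs.
move=> i Hi; rewrite nth_rcons Hs.
case: (ltngtP i N) => h; [exact: HQ | lia | by rewrite h].
Qed.

Lemma aux_size k n : n.+3 = (k + n.+3).-1 -> k = 1%N.
Proof. lia. Qed.

Lemma step n (t r : seq R) :
  size t = n -> size r = n.+1 ->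
  PP n = \prod_(z <- t) ('X - z%:P) -> PP n.+1 = \prod_(z <- r) ('X - z%:P) ->
  (forall i, (i < n)%N -> r`_i < t`_i < r`_i.+1) ->
  exists s : seq R, [/\ size s = n.+2, PP n.+2 = \prod_(z <- s) ('X - z%:P)
     & forall i, (i < n.+1)%N -> s`_i < r`_i < s`_i.+1].
Proof.
move=> St Sr Pn Pn1 It.
have rinc : forall a b, (a < b)%N -> (b <= n)%N -> r`_a < r`_b.
  apply: chain_lt => i Hi; have /andP[h1 h2] := It i Hi; exact: lt_trans h1 h2.
have rle : forall a b, (a <= b)%N -> (b <= n)%N -> r`_a <= r`_b.
  move=> a b Hab Hb; case: (ltngtP a b) => h; [exact/ltW/rinc | lia | by rewrite h].
set Q := PP n.+2.
have EQ : Q = 'X * PP n.+1 - (2 * (n.+1)%:R) *: PP n := PPrec n.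
have Qr : forall i, (i <= n)%N -> 0 < (-1) ^+ (n - i).+1 * Q.[r`_i].
  move=> i Hi.
  have root1 : (PP n.+1).[r`_i] = 0.
    by apply/rootP; rewrite Pn1 root_prod_XsubC mem_nth // Sr.
  rewrite EQ hornerD hornerN hornerZ hornerM hornerX root1 mulr0 add0r.
  have := @prod_sign (r`_i) t i.
  rewrite St => /(_ Hi) h.
  have {h} h : 0 < (-1) ^+ (n - i) * \prod_(z <- t) (r`_i - z).
    apply: h.
      move=> j Hj; have /andP[_ h2] := It j (leq_trans Hj Hi).
      exact: (lt_le_trans h2 (rle _ _ Hj Hi)).
    move=> j Hj1 Hj2; have /andP[h1 _] := It j Hj2.
    exact: (le_lt_trans (rle _ _ Hj1 (ltnW Hj2)) h1).
  rewrite Pn horner_prod (eq_bigr _ (fun z _ => hornerXsubC z (r`_i))) exprS.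
  set Pi := \prod_(_ <- _) _ in h *.
  have -> : -1 * (-1) ^+ (n - i) * - (2 * (n.+1)%:R * Pi) =
     (2 * (n.+1)%:R) * ((-1) ^+ (n - i) * Pi) by ring.
  by rewrite mulr_gt0 // mulr_gt0 // ltr0n.
have sPn : size (PP n) = n.+1 by rewrite Pn size_prod_XsubC St.
have sPn1 : size (PP n.+1) = n.+2 by rewrite Pn1 size_prod_XsubC Sr.
have lPn1 : lead_coef (PP n.+1) = 1.
  by rewrite Pn1; apply/monicP/monic_prod_XsubC.
have Pn1_0 : PP n.+1 != 0 by rewrite -size_poly_gt0 sPn1.
have hsz : (size (- ((2 * (n.+1)%:R) *: PP n))%R < size (PP n.+1 * 'X)%R)%N.
  rewrite size_polyN size_mulX // sPn1.
  have := size_scale_leq (2 * (n.+1)%:R) (PP n); rewrite sPn => h; exact: (leq_ltn_trans h).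
have sQ : size Q = n.+3.
  by rewrite EQ mulrC size_polyDl // size_mulX // sPn1.
have lQ : lead_coef Q = 1.
  by rewrite EQ mulrC lead_coefDl // lead_coefMX.
have Q0 : Q != 0 by rewrite -size_poly_gt0 sQ.
have lQ0 : 0 < lead_coef Q by rewrite lQ ltr01.
have [N1 HN1] := @poly_pinfty_gt_lc _ Q lQ0.
set y1 := Num.max N1 (r`_n + 1).
have Qy1 : 0 < Q.[y1].
  have := HN1 y1; rewrite lQ /y1 le_max lexx /= => /(_ isT) h.
  exact: lt_le_trans ltr01 h.
have ry1 : r`_n < y1.
  by rewrite /y1 lt_max; apply/orP; right; rewrite ltrDl ltr01.
set Q2 := (-1) ^+ n.+2 *: (Q \Po (- 'X)).
have lQ2 : 0 < lead_coef Q2.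
  rewrite /Q2 lead_coefZ lead_coef_comp ?size_polyN ?size_polyX //.
  by rewrite lQ lead_coefN lead_coefX sQ /= mul1r sgn_sq ltr01.
have [N2 HN2] := @poly_pinfty_gt_lc _ Q2 lQ2.
set y0 := - Num.max N2 (- r`_0 + 1).
have Qy0 : 0 < (-1) ^+ n.+2 * Q.[y0].
  have := HN2 (Num.max N2 (- r`_0 + 1)); rewrite le_max lexx /= => /(_ isT) h.
  move: (lt_le_trans lQ2 h).
  by rewrite /Q2 hornerZ horner_comp hornerN hornerX /y0.
have y0r : y0 < r`_0.
  rewrite /y0 ltrNl lt_max; apply/orP; right.
  by rewrite ltrDl ltr01.
have ex : forall i, (i < n.+2)%N -> exists x,
    [/\ root Q x, (0 < i)%N -> r`_i.-1 < x & (i <= n)%N -> x < r`_i].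
  move=> i Hi.
  case: i Hi => [|i] Hi.
    have h : Q.[y0] * Q.[r`_0] < 0.
      rewrite mulrC; apply: (@sign_mul n.+1); last exact: Qy0.
      by have := Qr 0%N (leq0n _); rewrite subn0.
    have [x] := poly_ivtoo (ltW y0r) h.
    rewrite in_itv /= => /andP[h1 h2] rx.
    by exists x; split.
  case: (ltnP i n) => Hin.
    have h : Q.[r`_i] * Q.[r`_i.+1] < 0.
      rewrite mulrC; apply: (@sign_mul (n - i.+1).+1).
        exact: Qr.
      have -> : (n - i.+1).+2 = (n - i).+1 by lia.
      by apply: Qr; lia.
    have [x] := poly_ivtoo (ltW (rinc i i.+1 (ltnSn _) Hin)) h.
    rewrite in_itv /= => /andP[h1 h2] rx.
    by exists x; split.
  have Ein : i = n by lia.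
  rewrite Ein.
  have h : Q.[r`_n] * Q.[y1] < 0.
    rewrite mulrC; apply: (@sign_mul 0%N).
      by rewrite expr0 mul1r.
    by have := Qr n (leqnn n); rewrite subnn.
  have [x] := poly_ivtoo (ltW ry1) h.
  rewrite in_itv /= => /andP[h1 h2] rx.
  by exists x; split => // /=; rewrite ltnn.
have [s [Ss Hs]] := build_seq _ _ ex.
have sr : forall i, (i < n.+1)%N -> s`_i < r`_i < s`_i.+1.
  move=> i Hi; have [_ _ h1] := Hs i (ltnW Hi); have [_ h2 _] := Hs i.+1 Hi.
  by rewrite h1 //= h2.
have us : uniq s.
  apply: lt_sorted_uniq; apply/(sortedP 0) => i Hi.
  rewrite Ss in Hi; have /andP[h1 h2] := sr i Hi.
  exact: lt_trans h1 h2.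
have rs : all (root Q) s.
  apply/allP => x /(nthP 0) [i Hi <-].
  by rewrite Ss in Hi; have [] := Hs i Hi.
have us' : poly.uniq_roots s by rewrite uniq_rootsE.
have [q EqQ] := uniq_roots_prod_XsubC rs us'.
have q0 : q != 0 by apply: contraNneq Q0 => q0; rewrite EqQ q0 mul0r.
have Pr0 : \prod_(z <- s) ('X - z%:P) != 0 by apply: monic_neq0; apply: monic_prod_XsubC.
have sq : size q = 1%N.
  have := congr1 (fun p : {poly R} => size p) EqQ; rewrite size_mul // size_prod_XsubC Ss sQ.
  exact: aux_size.
have lq : lead_coef q = 1.
  have := congr1 lead_coef EqQ; rewrite lead_coefM lQ.
  by rewrite (monicP (monic_prod_XsubC _ _ _)) mulr1.
have q1 : q = 1.
  rewrite (size1_polyC (eq_leq sq)); move: lq; rewrite /lead_coef sq /= => ->.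
  by [].
exists s; split => //.
by rewrite EqQ q1 mul1r.
Qed.


Lemma inv_all n : exists t r : seq R,
  [/\ size t = n, size r = n.+1, PP n = \prod_(z <- t) ('X - z%:P),
      PP n.+1 = \prod_(z <- r) ('X - z%:P)
    & forall i, (i < n)%N -> r`_i < t`_i < r`_i.+1].
Proof.
elim: n => [|n [t [r [St Sr Pn Pn1 It]]]].
  exists [::], [:: 0]; split => //.
    by rewrite PP0 big_nil.
  by rewrite PP1 big_cons big_nil subr0 mulr1.
have [s [Ss Ps Is]] := @step n t r St Sr Pn Pn1 It.
by exists r, s; split.
Qed.

Lemma part2 n : real_interlacing (hermite_scaled ((2 - 1) / 2 : R) n)
  (hermite_scaled ((2 - 1) / 2 : R) n.+1).
Proof.
rewrite -/(PP n) -/(PP n.+1).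
have [t [r [St Sr Pn Pn1 It]]] := inv_all n.
exists t, r; rewrite Pn Pn1; split.
- by apply: monic_neq0; apply: monic_prod_XsubC.
- by apply: monic_neq0; apply: monic_prod_XsubC.
- by rewrite size_prod_XsubC.
- by rewrite size_prod_XsubC.
split.
- by rewrite St Sr.
- by apply/allP => x hx; rewrite root_prod_XsubC.
- by apply/allP => x hx; rewrite root_prod_XsubC.
- by move=> i; rewrite St; apply: It.
Qed.

End Herm.

Theorem theorem4p1 (R : realType) (beta : R) (hbeta : beta != 0) :
  (forall p : {poly R},
     Tbeta beta p =
     \sum_(n < size p)
        ((n`!)%:R)^-1 *: (hermite_scaled ((beta - 1) / 2) n * p^`(n)))
  /\
  (forall n : nat,
     real_interlacing (hermite_scaled ((2 - 1) / 2 : R) n)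
                      (hermite_scaled ((2 - 1) / 2 : R) n.+1)).
Proof.
split; first by move=> p; apply: part1.
by move=> n; exact: (@part2 R n).
Qed.
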